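(* Let $d\geq1$ be an integer. Let $a_{i,j}$ ($0\leq i,j\leq d$, $i\neq j$) be complex numbers satisfying $a_{i,j}=a_{j,i}$ for all $i\neq j$, \[ g(a_{i,j},a_{j,k},a_{i,k})=0\quad\text{for all pairwise distinct } i,j,k, \] \[ h(a_{i,j},a_{i,k},a_{i,\ell},a_{j,k},a_{j,\ell},a_{k,\ell})=0\quad\text{for all pairwise distinct } i,j,k,\ell. \] Assume that $a_{i_0,i_1}\neq\pm2$ for some $i_0,i_1$ with $0\leq i_0<i_1\leq d$, and let $w_{i_0},w_{i_1}$ be nonzero complex numbers with $\frac{w_{i_0}}{w_{i_1}}+\frac{w_{i_1}}{w_{i_0}}=a_{i_0,i_1}$. Then for complex numbers $w_i$ ($0\leq i\leq d$, $i\neq i_0,i_1$) the following are equivalent: (i) for all $i,j$ with $0\leq i,j\leq d$ and $i\neq j$, $\frac{w_j}{w_i}+\frac{w_i}{w_j}=a_{i,j}$; (ii) for all $i$ with $0\leq i\leq d$, $i\neq i_0,i_1$, \[ w_i=\frac{w_{i_1}^2-w_{i_0}^2}{a_{i_1,i}w_{i_1}-a_{i_0,i}w_{i_0}}. \] Moreover, if one of the two equivalent conditions holds, all $a_{i,j}$ ($0\leq i<j\leq d$) are real, and $-2<a_{i_0,i_1}<2$, then $|w_i|=|w_j|$ for all $0\leq i<j\leq d$.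
   Context: Here $g(X,Y,Z)=X^2+Y^2+Z^2-XYZ-4$ and \[ h(X_{0,1},X_{0,2},X_{0,3},X_{1,2},X_{1,3},X_{2,3})=\det\begin{bmatrix}2&X_{0,1}&X_{0,2}\\ X_{0,1}&2&X_{1,2}\\ X_{0,3}&X_{1,3}&X_{2,3}\end{bmatrix}. \] *)

(* Defs.v *)
From HB Require Import structures.
From mathcomp Require Import all_boot all_order all_algebra.
From mathcomp Require Import complex.
From mathcomp Require Import reals.
Set Implicit Arguments. Unset Strict Implicit. Unset Printing Implicit Defensive.
Import Order.TTheory GRing.Theory Num.Theory.
Local Open Scope ring_scope.

Definition g {R : comRingType} (X Y Z : R) : R :=
  X ^+ 2 + Y ^+ 2 + Z ^+ 2 - X * Y * Z - 4.

Definition hmx {R : comRingType} (X01 X02 X03 X12 X13 X23 : R) : 'M[R]_3 :=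
  \matrix_(i < 3, j < 3)
    nth 0 (nth [::] [:: [:: 2; X01; X02]; [:: X01; 2; X12]; [:: X03; X13; X23]] i) j.

Definition h {R : comRingType} (X01 X02 X03 X12 X13 X23 : R) : R :=
  \det (hmx X01 X02 X03 X12 X13 X23).

(* Main.v *)
Require Import Defs.
From HB Require Import structures.
From mathcomp Require Import all_boot all_order all_algebra.
From mathcomp Require Import complex.
From mathcomp Require Import reals.
From mathcomp Require Import ring.
Import Order.TTheory GRing.Theory Num.Theory.
Local Open Scope ring_scope.

Lemma hE (R : comNzRingType) (X01 X02 X03 X12 X13 X23 : R) :
  h X01 X02 X03 X12 X13 X23 =
  2 * (2 * X23 - X12 * X13) - X01 * (X01 * X23 - X12 * X03) + X02 * (X01 * X13 - 2 * X03).
Proof.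
rewrite /h (expand_det_row _ ord0) !big_ord_recr big_ord0 /=.
rewrite /cofactor !(expand_det_row _ ord0) !big_ord_recr big_ord0 /=.
rewrite /cofactor !det_mx11 !mxE /= /bump /=.
rewrite !big_ord0 ?expr0 ?expr1 ?expr2. ring.
Qed.

Section Alg.
Context {F : fieldType}.

Lemma N_neq0 (x y a : F) : x != 0 -> y != 0 -> x/y + y/x = a -> a != 2 -> a != -2 ->
  y^+2 - x^+2 != 0.
Proof.
move=> hx hy ha h2 hm2; apply/negP => /eqP E.
have : (y - x) * (y + x) == 0 by apply/eqP; rewrite -E; ring.
rewrite mulf_eq0 subr_eq0 addr_eq0 => /orP [/eqP ey|/eqP ey].
  by move: h2; rewrite -ha ey divff // -[2]/(1+1) eqxx.
move: hm2; rewrite -ha ey invrN mulrN mulNr divff //.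
by rewrite -opprD -[2]/(1+1) eqxx.
Qed.

Lemma dir1 (x y z b c : F) : x != 0 -> y != 0 -> z != 0 -> y^+2 - x^+2 != 0 ->
  z/x + x/z = c -> z/y + y/z = b ->
  b*y - c*x != 0 /\ z = (y^+2 - x^+2)/(b*y - c*x).
Proof.
move=> hx hy hz hN ec eb.
have e : z * (b*y - c*x) = y^+2 - x^+2 by rewrite -ec -eb; field; apply/and3P.
have hD : b*y - c*x != 0.
  by apply/negP => /eqP D; move: hN; rewrite -e D mulr0 eqxx.
by split => //; rewrite -e mulfK.
Qed.

Lemma dir2g (x y z a b c : F) : x != 0 -> y != 0 -> y^+2 - x^+2 != 0 ->
  b*y - c*x != 0 -> a = x/y + y/x -> z = (y^+2 - x^+2)/(b*y - c*x) ->
  a^+2 + b^+2 + c^+2 - a*b*c - 4 = 0 ->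
  z != 0 /\ z/x + x/z = c.
Proof.
move=> hx hy hN hD ea ez hg.
have hz : z != 0 by rewrite ez mulf_neq0 ?invr_neq0.
have k : (z^+2 + x^+2 - c*x*z) * (b*y-c*x)^+2 = x^+2*y^+2*(a^+2+b^+2+c^+2-a*b*c-4).
  by rewrite ea ez; field; apply/and3P.
move: k; rewrite hg mulr0 => /eqP.
rewrite mulf_eq0 expf_eq0 (negbTE hD) andbF orbF => /eqP k.
split => //; apply/eqP; rewrite -subr_eq0.
have -> : z/x + x/z - c = (z^+2 + x^+2 - c*x*z) / (x*z) by field; apply/andP.
by rewrite k mul0r.
Qed.

Lemma dir2h (x y z1 z2 a b1 c1 b2 c2 e : F) : x != 0 -> y != 0 -> z1 != 0 -> z2 != 0 ->
  a = x/y + y/x -> a != 2 -> a != -2 ->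
  c1 = z1/x + x/z1 -> b1 = z1/y + y/z1 -> c2 = z2/x + x/z2 -> b2 = z2/y + y/z2 ->
  2 * (2 * e - b1 * b2) - a * (a * e - b1 * c2) + c1 * (a * b2 - 2 * c2) = 0 ->
  z2/z1 + z1/z2 = e.
Proof.
move=> hx hy h1 h2 ea ha2 ham2 ec1 eb1 ec2 eb2 H.
have k1 : (z2/z1+z1/z2)*(4-a^+2) = 2*b1*b2+2*c1*c2-a*(b1*c2+c1*b2).
  by rewrite ea ec1 eb1 ec2 eb2; field; apply/and4P.
have k2 : e*(4-a^+2) = 2*b1*b2+2*c1*c2-a*(b1*c2+c1*b2).
  by apply/eqP; rewrite -subr_eq0 -H; apply/eqP; ring.
have h4 : 4 - a^+2 != 0.
  have -> : 4 - a^+2 = (2 - a) * (2 + a) by ring.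
  rewrite mulf_neq0 // ?subr_eq0 1?eq_sym //.
  by rewrite eq_sym addrC addr_eq0.

apply/eqP; rewrite -subr_eq0; apply/eqP.
apply: (mulIf h4); rewrite mul0r mulrBl k1 k2 subrr //.
Qed.

End Alg.
Arguments N_neq0 {F x y a}.
Arguments dir2g {F x y z a b c}.
Arguments dir2h {F x y z1 z2 a b1 c1 b2 c2 e}.

Section Cplx.
Context {C : numClosedFieldType}.

Lemma unit_or_real (u c : C) : u != 0 -> u + u^-1 = c -> c \is Num.real ->
  u \is Num.real \/ `|u| = 1.
Proof.
move=> hu ec cr; case: (boolP (u \is Num.real)) => ur; [by left|right].
have hv : u^* != 0 by rewrite conjC_eq0.
have e2 : u^* + (u^*)^-1 = c by rewrite -fmorphV -rmorphD ec; apply/CrealP.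
have k : (u - u^*) * (u * u^* - 1) = u * u^* * ((u + u^-1) - (u^* + (u^*)^-1)).
  by field; apply/andP.
move: k; rewrite ec e2 subrr mulr0 => /eqP.
rewrite mulf_eq0 subr_eq0 eq_sym -CrealE (negbTE ur) /= subr_eq0 -normCK => k.
by apply/eqP; rewrite -(pexpr_eq1 (n:=2)).
Qed.

Lemma not_real (t a : C) : t != 0 -> t \is Num.real -> t + t^-1 = a -> -2 < a < 2 -> False.
Proof.
move=> ht tr ea /andP [l1 l2].
have k : a^+2 - 4 = (t - t^-1)^+2 by rewrite -ea; field.
have k1 : 0 <= a^+2 - 4 by rewrite k real_exprn_even_ge0 // rpredB // rpredV.
have k2 : 0 < 4 - a^+2.
  have -> : 4 - a^+2 = (2 - a) * (a - (-2)) by ring.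
  by rewrite mulr_gt0 // subr_gt0.
have : 0 < (4 - a^+2) + (a^+2 - 4) by apply: (lt_le_trans k2); rewrite lerDl.
have -> : (4 - a^+2) + (a^+2 - 4) = 0 by ring.
by rewrite ltxx.
Qed.

End Cplx.
Arguments unit_or_real {C u c}.
Arguments not_real {C t a}.

Theorem lemma2p4 (R : realType) (d : nat) (hd : (1 <= d)%N)
  (a : 'I_d.+1 -> 'I_d.+1 -> R[i])
  (a_sym : forall i j : 'I_d.+1, i != j -> a i j = a j i)
  (a_g : forall i j k : 'I_d.+1, i != j -> j != k -> i != k ->
           g (a i j) (a j k) (a i k) = 0)
  (a_h : forall i j k l : 'I_d.+1,
           i != j -> i != k -> i != l -> j != k -> j != l -> k != l ->
           h (a i j) (a i k) (a i l) (a j k) (a j l) (a k l) = 0)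
  (i0 i1 : 'I_d.+1) (hi01 : (i0 < i1)%N)
  (ha2 : a i0 i1 != 2) (ham2 : a i0 i1 != -2) :
  forall w : 'I_d.+1 -> R[i],
    w i0 != 0 -> w i1 != 0 -> w i0 / w i1 + w i1 / w i0 = a i0 i1 ->
    let cond1 := forall i j : 'I_d.+1, i != j ->
                   w i != 0 /\ w j != 0 /\ w j / w i + w i / w j = a i j in
    let cond2 := forall i : 'I_d.+1, i != i0 -> i != i1 ->
                   a i1 i * w i1 - a i0 i * w i0 != 0 /\
                   w i = (w i1 ^+ 2 - w i0 ^+ 2) / (a i1 i * w i1 - a i0 i * w i0) in
    (cond1 <-> cond2) /\
    (cond1 ->
     (forall i j : 'I_d.+1, (i < j)%N -> a i j \is Num.real) ->
     -2 < a i0 i1 < 2 ->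
     forall i j : 'I_d.+1, (i < j)%N -> `|w i| = `|w j|).
Proof.
move=> w hx hy hxy cond1 cond2.
have n01 : i0 != i1 by rewrite neq_ltn hi01.
have hN : w i1 ^+ 2 - w i0 ^+ 2 != 0 := N_neq0 hx hy hxy ha2 ham2.
have C1C2 : cond1 -> cond2.
  move=> H k hk0 hk1.
  have [_ [hz e0]] := H i0 k ltac:(by rewrite eq_sym).
  have [_ [_ e1]] := H i1 k ltac:(by rewrite eq_sym).
  by apply: dir1.
have C2C1 : cond2 -> cond1.
  move=> H.
  have P0 : forall k, k != i0 -> k != i1 -> w k != 0 /\ w k / w i0 + w i0 / w k = a i0 k.
    move=> k hk0 hk1; have [hD ez] := H k hk0 hk1.
    apply: (dir2g hx hy hN hD (esym hxy) ez).
    by have := a_g i0 i1 k n01 ltac:(by rewrite eq_sym) ltac:(by rewrite eq_sym); rewrite /g.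
  have P1 : forall k, k != i0 -> k != i1 -> w k != 0 /\ w k / w i1 + w i1 / w k = a i1 k.
    move=> k hk0 hk1; have [hD ez] := H k hk0 hk1.
    have hD' : a i0 k * w i0 - a i1 k * w i1 != 0 by rewrite -opprB oppr_eq0.
    have hN' : w i0 ^+ 2 - w i1 ^+ 2 != 0 by rewrite -opprB oppr_eq0.
    apply: (dir2g hy hx hN' hD' _ _ (b:=a i0 k) (a:=a i1 i0)).
    - by rewrite a_sym 1?eq_sym // -hxy addrC.
    - by rewrite ez -[w i0 ^+ 2 - _]opprB -[a i0 k * _ - _]opprB invrN mulrNN.
    have := a_g i1 i0 k ltac:(by rewrite eq_sym) ltac:(by rewrite eq_sym) ltac:(by rewrite eq_sym).
    by rewrite /g a_sym 1?eq_sym.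
  have nz : forall k, w k != 0.
    move=> k; case: (eqVneq k i0) => [->//|hk0]; case: (eqVneq k i1) => [->//|hk1].
    by case: (P0 k hk0 hk1).
  move=> i j hij; split; first exact: nz; split; first exact: nz.
  case: (eqVneq i i0) => [ei|hi0].
    subst i; case: (eqVneq j i1) => [->|hj1]; first by rewrite addrC.
    by case: (P0 j ltac:(by rewrite eq_sym) hj1).
  case: (eqVneq i i1) => [ei|hi1].
    subst i; case: (eqVneq j i0) => [->|hj0]; first by rewrite a_sym 1?eq_sym.
    by case: (P1 j hj0 ltac:(by rewrite eq_sym)).
  case: (eqVneq j i0) => [->|hj0].
    by case: (P0 i hi0 hi1) => _ e; rewrite a_sym // -e addrC.
  case: (eqVneq j i1) => [->|hj1].
    by case: (P1 i hi0 hi1) => _ e; rewrite a_sym // -e addrC.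
  have [hzi ci] := P0 i hi0 hi1; have [_ bi] := P1 i hi0 hi1.
  have [hzj cj] := P0 j hj0 hj1; have [_ bj] := P1 j hj0 hj1.
  apply: (dir2h hx hy hzi hzj (esym hxy) ha2 ham2 (esym ci) (esym bi) (esym cj) (esym bj)).
  have := a_h i0 i1 i j n01 ltac:(by rewrite eq_sym) ltac:(by rewrite eq_sym)
            ltac:(by rewrite eq_sym) ltac:(by rewrite eq_sym) hij.
  by rewrite hE.
split; first by split.
move=> H1 Hr /andP [l1 l2].
have rl : forall i j, i != j -> a i j \is Num.real.
  move=> i j; rewrite neq_ltn => /orP [lij|lji]; first exact: Hr.
  by rewrite a_sym ?Hr // neq_ltn lji orbT.
have n2 : -2 < a i0 i1 < 2 by rewrite l1 l2.
have e01 : `|w i1| = `|w i0|.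
  have ht : w i1 / w i0 != 0 by rewrite mulf_neq0 ?invr_neq0.
  have et : w i1 / w i0 + (w i1 / w i0)^-1 = a i0 i1 by rewrite invf_div addrC.
  case: (unit_or_real ht et (rl _ _ n01)) => [tr|t1].
    by case: (not_real ht tr et n2).
  by rewrite -[w i1](divfK hx) normrM t1 mul1r.
have ek : forall k, `|w k| = `|w i0|.
  move=> k; case: (eqVneq k i0) => [->//|hk0]; case: (eqVneq k i1) => [->//|hk1].
  have [_ [hz e0]] := H1 i0 k ltac:(by rewrite eq_sym).
  have [_ [_ e1]] := H1 i1 k ltac:(by rewrite eq_sym).
  have hu : w k / w i0 != 0 by rewrite mulf_neq0 ?invr_neq0.
  have hv : w k / w i1 != 0 by rewrite mulf_neq0 ?invr_neq0.
  have eu : w k / w i0 + (w k / w i0)^-1 = a i0 k by rewrite invf_div.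
  have ev : w k / w i1 + (w k / w i1)^-1 = a i1 k by rewrite invf_div.
  case: (unit_or_real hu eu (rl i0 k ltac:(by rewrite eq_sym))) => [ur|u1];
    last by rewrite -[w k](divfK hx) normrM u1 mul1r.
  case: (unit_or_real hv ev (rl i1 k ltac:(by rewrite eq_sym))) => [vr|v1];
    last by rewrite -e01 -[w k](divfK hy) normrM v1 mul1r.
  have ht : w i1 / w i0 != 0 by rewrite mulf_neq0 ?invr_neq0.
  have et : w i1 / w i0 + (w i1 / w i0)^-1 = a i0 i1 by rewrite invf_div addrC.
  have tr : w i1 / w i0 \is Num.real.
    have -> : w i1 / w i0 = (w k / w i0) / (w k / w i1) by field; apply/and3P.
    by rewrite rpredM // rpredV.
  by case: (not_real ht tr et n2).
by move=> i j _; rewrite !ek.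
Qed.
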